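(* Let $\mathcal B$ and $\tilde{\mathcal B}$ be two matrix bundles of $n\times n$ complex matrices such that the closure $\overline{\tilde{\mathcal B}}\supseteq\mathcal B$, and such that a matrix in $\mathcal B$ has at least as many distinct eigenvalues as a matrix in $\tilde{\mathcal B}$. Let $d=\{d_1\ge d_2\ge\cdots\}$ and $\tilde d=\{\tilde d_1\ge\tilde d_2\ge\cdots\}$ be the degree sequences of minimal polynomials associated with $\mathcal B$ and $\tilde{\mathcal B}$ respectively. Then, as partitions of $n$, $\tilde d\ge d$ in the dominance ordering, i.e. $$\tilde d_1+\tilde d_2+\cdots+\tilde d_j\ \ge\ d_1+d_2+\cdots+d_j\qquad\text{for each } j=1,2,\dots.$$
   Context: For an eigenvalue $\lambda$ of a matrix with elementary Jordan blocks of orders $n_1\ge n_2\ge\cdots\ge n_l>0$, its Segre characteristic is the infinite sequence $\{n_1,\dots,n_l,0,0,\dots\}$. Given $k$ nonincreasing sequences $\{n_{i1}\ge n_{i2}\ge\cdots\}$ of nonnegative integers ($i=1,\dots,k$, finitely many nonzero terms) with $\sum_{i,j}n_{ij}=n$, the matrix bundle they define is the set of all $n\times n$ complex matrices having exactly $k$ distinct eigenvalues (with arbitrary values) whose Segre characteristics are these sequences. The closure is taken in $\mathbb{C}^{n\times n}$. For a matrix in such a bundle, its minimal polynomials (invariant factors) $p_1,p_2,\dots$ satisfy $p_{i+1}\mid p_i$, and $\deg p_i=d_i=\sum_{j=1}^k n_{ji}$; the sequence $d=\{d_1\ge d_2\ge\cdots\}$ is the degree sequence of minimal polynomials associated with the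 bundle, and it is a partition of $n$. *)

(* Defs.v *)
From HB Require Import structures.
From mathcomp Require Import all_boot all_order all_algebra.
From mathcomp Require Import complex.
From mathcomp Require Import reals.
Set Implicit Arguments. Unset Strict Implicit. Unset Printing Implicit Defensive.
Import Order.TTheory GRing.Theory Num.Theory.
Local Open Scope ring_scope.

(* A Segre characteristic (of one eigenvalue), given by its nonzero terms:
   a nonempty nonincreasing list of positive integers n_1 >= n_2 >= ... > 0. *)
Definition segre_seq (p : seq nat) : bool :=
  [&& sorted geq p, all (fun x => 0 < x)%N p & p != [::]].

Definition bundle_data (n : nat) (ps : seq (seq nat)) : bool :=
  all segre_seq ps && (sumn (map sumn ps) == n).

(* Jordan matrix with a list of elementary Jordan blocks (eigenvalue, order),
   placed consecutively along the diagonal. Each position carries its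
   diagonal entry and whether a superdiagonal 1 follows inside its block. *)
Definition jordan_data (C : Type) (blocks : seq (C * nat)) : seq (C * bool) :=
  flatten [seq [seq (b.1, (k.+1 < b.2)%N) | k <- iota 0 b.2] | b <- blocks].

Definition jordan_mx (C : nzRingType) (n : nat) (blocks : seq (C * nat)) : 'M[C]_n :=
  \matrix_(i < n, j < n)
    let e := nth (0, false) (jordan_data blocks) i in
    if i == j then e.1
    else if (j == i.+1 :> nat) && e.2 then 1 else 0.

(* The matrix bundle defined by ps = [:: p_1; ...; p_k]: matrices having
   exactly k distinct eigenvalues lam_1, ..., lam_k (arbitrary values), the
   Segre characteristic of lam_i being p_i; i.e. matrices similar to the
   Jordan matrix with blocks J_{p_i j}(lam_i). *)
Definition in_bundle (R : realType) (n : nat) (ps : seq (seq nat))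
    (A : 'M[R[i]]_n) : Prop :=
  exists lam : seq R[i],
    [/\ size lam = size ps, uniq lam &
      exists P : 'M[R[i]]_n, P \in unitmx /\
        A = invmx P *m jordan_mx n
              (flatten [seq [seq (x.1, m) | m <- x.2] | x <- zip lam ps]) *m P].

Definition in_closure (R : realType) (n : nat) (S : 'M[R[i]]_n -> Prop)
    (A : 'M[R[i]]_n) : Prop :=
  forall e : R, 0 < e ->
    exists B, S B /\ forall i j, `|A i j - B i j| < (e%:C)%C.

(* Degree sequence of minimal polynomials: d_i = sum_j n_{j i} (0-indexed). *)
Definition deg_seq (ps : seq (seq nat)) (i : nat) : nat :=
  (\sum_(p <- ps) nth 0 p i)%N.

(* Main.v *)
Require Import Defs.
From HB Require Import structures.
From mathcomp Require Import all_boot all_order all_algebra.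
From mathcomp Require Import complex.
From mathcomp Require Import reals.
From mathcomp Require Import zify ring.
Import Order.TTheory GRing.Theory Num.Theory.

Module PartA.
Set Implicit Arguments. Unset Strict Implicit. Unset Printing Implicit Defensive.

Section Lab.
Variable K : eqType.
Variable k0 : K.

Definition lab (kb : seq (K * nat)) : seq (K * nat * nat) :=
  flatten [seq [seq (b.1, t, b.2) | t <- iota 0 b.2] | b <- kb].

Local Notation dl := (k0, 0%N, 0%N).

Lemma lab_cons b kb : lab (b :: kb) = [seq (b.1, t, b.2) | t <- iota 0 b.2] ++ lab kb.
Proof. by []. Qed.

Lemma size_lab kb : size (lab kb) = sumn (map snd kb).
Proof. by elim: kb => //= b kb IH; rewrite lab_cons size_cat size_map size_iota IH. Qed.

Lemma lab_next kb p k t m : p < size (lab kb) -> nth dl (lab kb) p = (k, t, m) ->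
  t.+1 < m -> p.+1 < size (lab kb) /\ nth dl (lab kb) p.+1 = (k, t.+1, m).
Proof.
elim: kb p => //= b kb IH p; rewrite lab_cons size_cat size_map size_iota nth_cat size_map size_iota.
move=> hs; case: (ltnP p b.2) => hp.
  rewrite (nth_map 0%N) ?size_iota // nth_iota // add0n => [[<- <- <-]] ht.
  split; first by apply: leq_trans (leq_addr _ _).
  by rewrite nth_cat size_map size_iota ht (nth_map 0%N) ?size_iota // nth_iota.
move=> hn ht; have hs' : p - b.2 < size (lab kb) by rewrite ltn_subLR // addnC.
have [h1 h2] := IH _ hs' hn ht; split; first by lia.
by rewrite nth_cat size_map size_iota ltnNge (leq_trans hp) // subSn.
Qed.

Lemma lab_start kb p k t m : p < size (lab kb) -> nth dl (lab kb) p = (k, t, m) ->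
  t <= p /\ nth dl (lab kb) (p - t) = (k, 0%N, m).
Proof.
elim: kb p => //= b kb IH p; rewrite lab_cons size_cat size_map size_iota nth_cat size_map size_iota.
move=> hs; case: (ltnP p b.2) => hp.
  rewrite (nth_map 0%N) ?size_iota // nth_iota // add0n => [[<- <- <-]].
  have h0 : 0 < b.2 by lia.
  by split=> //; rewrite subnn nth_cat size_map size_iota h0 (nth_map 0%N) ?size_iota // nth_iota.
move=> hn; have hs' : p - b.2 < size (lab kb) by rewrite ltn_subLR // addnC.
have [h1 h2] := IH _ hs' hn; split.
  by lia.
rewrite nth_cat size_map size_iota.
have -> : (p - t < b.2) = false by lia.
by have -> : p - t - b.2 = p - b.2 - t by lia.
Qed.

Lemma lab_mem kb l : l \in lab kb -> exists2 b, b \in kb & (l.1.1 = b.1 /\ l.2 = b.2 /\ l.1.2 < b.2).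
Proof.
elim: kb => //= b kb IH; rewrite lab_cons mem_cat => /orP [/mapP [t]|/IH [b' hb' h]].
  rewrite mem_iota add0n => /andP [_ ht] ->; exists b; rewrite ?mem_head //.
by exists b' => //; rewrite inE hb' orbT.
Qed.

Lemma uniq_lab kb : uniq (map fst kb) -> uniq (lab kb).
Proof.
elim: kb => //= b kb IH /andP [hb hu]; rewrite lab_cons cat_uniq IH // andbT.
rewrite map_inj_uniq ?iota_uniq; last by move=> x y [].
apply/hasPn => l /lab_mem [b' hb' [h1 _]] /=; apply/mapP => [[t _ hl]].
by move: hb; rewrite hl /= in h1; rewrite h1 (map_f fst hb').
Qed.

Lemma count_lab (P : pred (K * nat * nat)) kb :
  count P (lab kb) = sumn [seq count P [seq (b.1, t, b.2) | t <- iota 0 b.2] | b <- kb].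
Proof. by elim: kb => //= b kb IH; rewrite lab_cons count_cat IH. Qed.

End Lab.

End PartA.
Import PartA.

Module PartB.
Set Implicit Arguments. Unset Strict Implicit. Unset Printing Implicit Defensive.
Local Open Scope ring_scope.

Section Jordan.
Variables (F : fieldType) (K : eqType) (k0 : K) (phi : K -> F) (kb : seq (K * nat)) (n' : nat).
Local Notation n := n'.+1.
Hypothesis Hn : size (lab kb) = n.
Local Notation dl := (k0, 0%N, 0%N).
Definition bl := map (fun b => (phi b.1, b.2)) kb.
Local Notation J := (jordan_mx n bl).
Definition ev (p : nat) : 'rV[F]_n := \row_q ((q : nat) == p)%:R.

Lemma jdata : jordan_data bl = map (fun l => (phi l.1.1, l.1.2.+1 < l.2)%N) (lab kb).
Proof.
rewrite /jordan_data /bl /lab map_flatten -!map_comp; congr flatten.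
by apply: eq_map => b /=; rewrite -map_comp.
Qed.

Lemma ev_mul p (M : 'M[F]_n) (hp : (p < n)%N) : ev p *m M = row (Ordinal hp) M.
Proof.
apply/rowP => q; rewrite !mxE (bigD1 (Ordinal hp)) //= big1 ?mxE ?eqxx ?mul1r ?addr0 //.
by move=> i hi; rewrite mxE; case: eqP => [h|]; rewrite ?mul0r //; case/eqP: hi; apply: val_inj.
Qed.

Lemma ev_ge p : (n <= p)%N -> ev p = 0.
Proof. by move=> h; apply/rowP => q; rewrite !mxE; case: eqP => // hq; move: (ltn_ord q); lia. Qed.

Lemma evJ p k t m c : (p < n)%N -> nth dl (lab kb) p = (k, t, m) ->
  ev p *m (J - c%:M) = (phi k - c) *: ev p + (if (t.+1 < m)%N then ev p.+1 else 0).
Proof.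
move=> hp hl; rewrite ev_mul; apply/rowP => q; rewrite !mxE.
rewrite jdata (nth_map dl) ?Hn // hl /=.
rewrite [Ordinal hp == q]eq_sym -val_eqE /=.
case: (t.+1 < m)%N; rewrite ?mxE ?andbT ?andbF; case: (eqVneq (q : nat) p) => hq /=.
all: try (have -> : (val q == p.+1) = false by apply/negbTE; rewrite hq; lia).
all: try (have -> : (q == p.+1 :> nat) = false by apply/negbTE; rewrite hq; lia).
all: rewrite /= ?mulr1n ?mulr1 ?mulr0n ?mulr0 ?addr0 ?subr0 ?add0r //.
by case: eqP.
Qed.


Lemma lab_lt p k t m : (p < size (lab kb))%N -> nth dl (lab kb) p = (k, t, m) -> (t < m)%N.
Proof.
move=> hp hl; have := mem_nth dl hp; rewrite hl => /lab_mem [b _ /= [_ [-> ->]]] //.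
Qed.

Lemma hornerXC c : horner_mx J ('X - c%:P) = J - c%:M.
Proof. by rewrite rmorphB /= horner_mx_X horner_mx_C. Qed.

Lemma ev_kill p k t m : (p < n)%N -> nth dl (lab kb) p = (k, t, m) ->
  ev p *m (J - (phi k)%:M) ^+ (m - t) = 0.
Proof.
move=> hp hl; have := lab_lt; rewrite Hn => /(_ _ _ _ _ hp hl) htm.
move: {2}(m - t)%N (erefl (m - t)%N) => d; elim: d p t hp hl htm => [|d IH] p t hp hl htm hd.
  by lia.
rewrite hd exprS -mulmxE mulmxA (evJ (phi k) hp hl) subrr scale0r add0r.
case: ifP => h; last by rewrite mul0mx.
have := lab_next (kb := kb) (k0 := k0); rewrite Hn => /(_ _ _ _ _ hp hl h) [h1 h2].
have e : (m - t.+1)%N = d by lia.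
by rewrite -e; apply: IH h1 h2 _ _ => //; lia.
Qed.

Lemma ev_kill_dvd p k t m g : (p < n)%N -> nth dl (lab kb) p = (k, t, m) ->
  (('X - (phi k)%:P) ^+ (m - t) %| g) -> ev p *m horner_mx J g = 0.
Proof.
move=> hp hl hd; rewrite -(divpK hd) mulrC rmorphM rmorphXn /= hornerXC -mulmxE mulmxA.
by rewrite (ev_kill hp hl) mul0mx.
Qed.

Lemma ev_chain r p k t m : (p < n)%N -> nth dl (lab kb) p = (k, t, m) -> (t + r < m)%N ->
  ev p *m (J - (phi k)%:M) ^+ r = ev (p + r).
Proof.
elim: r p t => [|r IH] p t hp hl htr; first by rewrite expr0 mulmx1 addn0.
rewrite exprS -mulmxE mulmxA (evJ (phi k) hp hl) subrr scale0r add0r.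
have h : (t.+1 < m)%N by lia.
rewrite h; have := lab_next (kb := kb) (k0 := k0); rewrite Hn => /(_ _ _ _ _ hp hl h) [h1 h2].
by rewrite (IH _ _ h1 h2) ?addSnnS //; lia.
Qed.

End Jordan.

End PartB.
Import PartB.

Module PartC.
Set Implicit Arguments. Unset Strict Implicit. Unset Printing Implicit Defensive.
Local Open Scope ring_scope.

Section Krylov.
Variables (F : fieldType) (n' j : nat).
Local Notation n := n'.+1.

Lemma horner_mxE (B : 'M[F]_n) (p : {poly F}) :
  horner_mx B p = \sum_(i < size p) p`_i *: B ^+ i.
Proof.
rewrite -{1}(coefK p) poly_def linear_sum /=; apply: eq_bigr => i _.
by rewrite linearZ /= rmorphXn /= horner_mx_X.
Qed.

Definition Kry N (B : 'M[F]_n) (V : 'M[F]_(j, n)) := (\sum_(k < N) <<V *m B ^+ k>>)%MS.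

Lemma low_sub (B : 'M[F]_n) (V : 'M[F]_(j, n)) d (r : {poly F}) : (size r <= d)%N ->
  (V *m horner_mx B r <= \sum_(l < d) <<V *m B ^+ l>>)%MS.
Proof.
move=> hr; rewrite horner_mxE mulmx_sumr; apply/summx_sub => i _.
rewrite -scalemxAr; apply: scalemx_sub.
have hi : (i < d)%N by apply: leq_trans (ltn_ord i) hr.
by apply: (sumsmx_sup (Ordinal hi)); rewrite ?genmxE.
Qed.

Lemma Kry_upper N (B : 'M[F]_n) (V : 'M[F]_(j, n)) f : f \is monic ->
  (\rank (Kry N B V) <= \rank (horner_mx B f) + j * (size f).-1)%N.
Proof.
move=> fm; have f0 := monic_neq0 fm.
have hsf : (0 < size f)%N by rewrite size_poly_gt0.
set d := (size f).-1.
have sub : (Kry N B V <= horner_mx B f + \sum_(l < d) <<V *m B ^+ l>>)%MS.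
  apply/sumsmx_subP => k _; rewrite genmxE.
  have -> : B ^+ k = horner_mx B ('X^k) by rewrite rmorphXn /= horner_mx_X.
  rewrite (divp_eq 'X^k f) rmorphD rmorphM /= -mulmxE mulmxDr mulmxA.
  apply: addmx_sub_adds; first exact: submxMl.
  apply: low_sub; rewrite /d -ltnS prednK //; exact: ltn_modpN0.
apply: leq_trans (mxrankS sub) _.
apply: leq_trans (mxrank_adds_leqif _ _).1 _; rewrite leq_add2l.
apply: leq_trans (mxrank_sum_leqif _).1 _.
rewrite /=.
have h : forall i : 'I_d, (\rank <<V *m B ^+ i>> <= j)%N.
  by move=> i; rewrite genmxE (leq_trans (mxrankM_maxl _ _) (rank_leq_row V)).
apply: (@leq_trans (\sum_(i < d) j)%N); first by apply: leq_sum => i _; exact: h.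
by rewrite sum_nat_const card_ord mulnC.
Qed.


Lemma conj_pow (P J : 'M[F]_n) k : P \in unitmx ->
  (invmx P *m J *m P) ^+ k = invmx P *m J ^+ k *m P.
Proof.
move=> hP; elim: k => [|k IH]; first by rewrite !expr0 mulmx1 mulVmx.
rewrite exprS IH -!mulmxE !mulmxA -[invmx P *m J *m P *m invmx P]mulmxA mulmxV //.
by rewrite mulmx1 exprS -mulmxE !mulmxA.
Qed.

Lemma conj_horner (P J : 'M[F]_n) f : P \in unitmx ->
  horner_mx (invmx P *m J *m P) f = invmx P *m horner_mx J f *m P.
Proof.
move=> hP; rewrite !horner_mxE mulmx_sumr mulmx_suml; apply: eq_bigr => i _.
by rewrite conj_pow // scalemxAl scalemxAr.
Qed.

Lemma rank_ev_set (Z : {set 'I_n}) (M : 'M[F]_n) :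
  (forall p, p \in Z -> ev F n' p *m M = 0) -> (#|Z| + \rank M <= n)%N.
Proof.
move=> hZ; set E := \matrix_(z < #|Z|) ev F n' (enum_val z).
have hE : (E <= kermx M)%MS.
  by apply/row_subP => z; rewrite rowK; apply/sub_kermxP; apply: hZ; apply: enum_valP.
have rE : \rank E = #|Z|.
  apply/eqP; apply/row_freeP; exists E^T; apply/matrixP => z z'.
  rewrite !mxE (bigD1 (enum_val z)) //= big1 => [|q hq]; last first.
    by rewrite !mxE; case: eqP => [/val_inj h|]; rewrite ?mul0r //; move: hq; rewrite h eqxx.
  rewrite !mxE eqxx mul1r addr0 (inj_eq val_inj) (inj_eq enum_val_inj).
  by case: eqP.
have := mxrankS hE; rewrite mxrank_ker rE => h.
by have := rank_leq_row M; lia.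
Qed.

End Krylov.

End PartC.
Import PartC.

Module PartD0.
Set Implicit Arguments. Unset Strict Implicit. Unset Printing Implicit Defensive.

Lemma card_nth (T : Type) (x0 : T) (s : seq T) n (P : pred T) : size s = n ->
  #|[set p : 'I_n | P (nth x0 s p)]| = count P s.
Proof.
move=> hs; rewrite cardsE cardE /enum_mem size_filter.
rewrite -enumT.
rewrite (@eq_count _ _ (preim val (fun i => P (nth x0 s i)))) // -count_map val_enum_ord.
by rewrite -count_map -hs -/(mkseq _ _) mkseq_nth.
Qed.

Lemma count_ge a b m : count (fun t => a <= t) (iota b m) = m - (a - b).
Proof. by elim: m b => //= m IH b; rewrite IH; case: leqP => h; lia. Qed.

Lemma count_min m e : count (fun t => m <= t + e) (iota 0 m) = minn m e.
Proof.
have -> : minn m e = m - (m - e - 0) by lia.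
rewrite -(count_ge (m - e) 0 m); apply: eq_count => t /=; lia.
Qed.

Lemma segre_id p j : sorted geq p ->
  \sum_(m <- p) minn m (nth 0 p j) + \sum_(i < j) nth 0 p i = j * nth 0 p j + sumn p.
Proof.
elim: p j => [|a p IH] j /=.
  by rewrite big_nil big1 ?nth_nil ?muln0 // => i _; rewrite nth_nil.
move=> hs; have hall : all (geq a) p by apply: order_path_min hs => x y z /= h1 h2; lia.
have hp : sorted geq p by apply: path_sorted hs.
have hle : forall m, m \in p -> m <= a by move=> m hm; have := allP hall m hm.
case: j => [|j].
  rewrite big_ord0 addn0 big_cons minnn sumnE big_seq [in RHS]big_seq; congr (_ + _).
  by apply: eq_bigr => m hm; apply/minn_idPl/hle.
rewrite big_ord_recl /= big_cons.
have he : nth 0 p j <= a.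
  by case: (ltnP j (size p)) => h; [apply/hle/mem_nth | rewrite nth_default].
have -> : \sum_(i < j) nth 0 p (0 + i) = \sum_(i < j) nth 0 p i by apply: eq_bigr => i _; rewrite add0n.
have := IH j hp; rewrite (minn_idPr he); lia.
Qed.

End PartD0.
Import PartD0.

Module PartD.
Set Implicit Arguments. Unset Strict Implicit. Unset Printing Implicit Defensive.
Local Open Scope ring_scope.

Definition kbt (F : Type) (lam : seq F) (pt : seq (seq nat)) : seq ((F * seq nat) * nat) :=
  flatten [seq [seq (x, m) | m <- x.2] | x <- zip lam pt].

Lemma kbt_cons F (c : F) lam p pt : kbt (c :: lam) (p :: pt) = [seq ((c, p), m) | m <- p] ++ kbt lam pt.
Proof. by []. Qed.

Lemma sumn_kbt F (lam : seq F) pt (G : nat -> seq nat -> nat) : size lam = size pt ->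
  sumn [seq G b.2 b.1.2 | b <- kbt lam pt] = (\sum_(p <- pt) \sum_(m <- p) G m p)%N.
Proof.
elim: pt lam => [|p pt IH] [|c lam] //=; first by rewrite big_nil.
move=> [hs]; rewrite kbt_cons map_cat sumn_cat IH // big_cons; congr (_ + _)%N.
by rewrite -map_comp sumnE big_map.
Qed.

Lemma sum_zip F (lam : seq F) pt (H : seq nat -> nat) : size lam = size pt ->
  (\sum_(x <- zip lam pt) H x.2 = \sum_(p <- pt) H p)%N.
Proof.
elim: pt lam => [|p pt IH] [|c lam] //=; first by rewrite !big_nil.
by move=> [hs]; rewrite !big_cons IH.
Qed.

Lemma kbt_mem (F : eqType) (lam : seq F) pt b : b \in kbt lam pt -> b.1 \in zip lam pt.
Proof. by move/flattenP => [s /mapP [x hx ->] /mapP [m _ ->]]. Qed.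

Section Upper.
Variables (F : fieldType) (n' : nat).
Local Notation n := n'.+1.

Lemma bl_kbt (lam : seq F) pt :
  bl fst (kbt lam pt) = flatten [seq [seq (x.1, m) | m <- x.2] | x <- zip lam pt].
Proof.
rewrite /bl /kbt map_flatten -map_comp; congr flatten.
by apply: eq_map => x /=; rewrite -map_comp.
Qed.

Lemma size_prod_XE (I : Type) (s : seq I) (c : I -> F) (e : I -> nat) :
  size (\prod_(x <- s) ('X - (c x)%:P) ^+ e x) = (\sum_(x <- s) e x).+1%N.
Proof.
elim: s => [|x s IH]; first by rewrite !big_nil size_poly1.
rewrite !big_cons size_Mmonic ?size_exp_XsubC ?IH //.
- by rewrite addSn addnS.
- by rewrite expf_neq0 // polyXsubC_eq0.
elim: s {IH} => [|y s IH]; rewrite ?big_nil ?monic1 // big_cons.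
by rewrite monicMl // monic_exp // monicXsubC.
Qed.

Lemma upper pt (lam : seq F) (P : 'M[F]_n) j N (V : 'M[F]_(j, n)) :
  bundle_data n pt -> size lam = size pt -> P \in unitmx ->
  (\rank (Kry N (invmx P *m jordan_mx n
      (flatten [seq [seq (x.1, m) | m <- x.2] | x <- zip lam pt]) *m P) V)
   <= \sum_(i < j) deg_seq pt i)%N.
Proof.
move=> /andP [hseg /eqP hn] hl hP.
set kb := kbt lam pt.
have Hn : size (lab kb) = n.
  have := sumn_kbt (fun m (_ : seq nat) => m) hl => /= h.
  rewrite size_lab -hn h sumnE big_map; apply: eq_bigr => p _; by rewrite sumnE.
rewrite -bl_kbt -/kb.
set J := jordan_mx n (bl fst kb).
set f := \prod_(x <- zip lam pt) ('X - x.1%:P) ^+ (nth 0%N x.2 j).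
have fm : f \is monic.
  rewrite /f; elim: (zip lam pt) => [|y s IH]; rewrite ?big_nil ?monic1 // big_cons.
  by rewrite monicMl // monic_exp // monicXsubC.
apply: leq_trans (Kry_upper N _ V fm) _.
rewrite conj_horner // size_prod_XE /= (sum_zip (fun p => nth 0%N p j) hl).
have r1 : (\rank (invmx P *m horner_mx J f *m P) <= \rank (horner_mx J f))%N.
  by apply: leq_trans (mxrankM_maxl _ _) (mxrankM_maxr _ _).
set Zp := fun l : (F * seq nat) * nat * nat => (l.2 <= l.1.2 + nth 0 l.1.1.2 j)%N.
set Z := [set p : 'I_n | Zp (nth ((0 : F, [::]), 0%N, 0%N) (lab kb) p)].
have hZ : forall p, p \in Z -> ev F n' p *m horner_mx J f = 0.
  move=> p; rewrite inE /Zp.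
  case hlp : (nth ((0 : F, [::]), 0%N, 0%N) (lab kb) p) => [[x t] m] /= hz.
  apply: (ev_kill_dvd Hn (ltn_ord p) hlp).
  have hx : x \in zip lam pt.
    have := mem_nth ((0 : F, [::]), 0%N, 0%N) (_ : (p < size (lab kb))%N).
    rewrite Hn => /(_ (ltn_ord p)); rewrite hlp => /lab_mem [b hb [/= -> _]].
    exact: kbt_mem hb.
  apply: dvdp_trans (dvdp_exp2l _ (_ : (m - t <= nth 0 x.2 j)%N)) _; first by rewrite leq_subLR.
  by rewrite /f (big_rem _ hx) /= dvdp_mulIl.
have cZ : #|Z| = (\sum_(p <- pt) \sum_(m <- p) minn m (nth 0 p j))%N.
  rewrite card_nth // count_lab -(sumn_kbt (fun m p => minn m (nth 0%N p j)) hl).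
  by congr sumn; apply: eq_map => b; rewrite count_map -count_min; apply: eq_count => t.
have := rank_ev_set hZ; rewrite cZ => h1.
have h2 : (\sum_(p <- pt) \sum_(m <- p) minn m (nth 0 p j) + \sum_(i < j) deg_seq pt i
   = j * \sum_(p <- pt) nth 0 p j + n)%N.
  rewrite /deg_seq exchange_big /= -big_split /= -hn sumnE big_map big_distrr -big_split /=.
  rewrite big_seq [RHS]big_seq; apply: eq_bigr => p hp.
  by rewrite segre_id //; have := allP hseg p hp; case/and3P.
have h1' : (\sum_(p <- pt) \sum_(m <- p) minn m (nth 0 p j) + \rank (horner_mx J f) <= n)%N := h1.
move: (\sum_(i < j) deg_seq pt i)%N (\sum_(p <- pt) \sum_(m <- p) minn m (nth 0 p j))%N (\rank (horner_mx J f)) (\sum_(p <- pt) nth 0 p j)%N (\rank (invmx P *m horner_mx J f *m P)) h1' h2 r1 => a b c d e H1 H2 R1. lia.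
Qed.

End Upper.

End PartD.
Import PartD.

Module PartE0.
Set Implicit Arguments. Unset Strict Implicit. Unset Printing Implicit Defensive.

Definition kbs (F : Type) (lam : seq F) (ps : seq (seq nat)) :=
  flatten [seq [seq ((x, i), nth 0 x.2 i) | i <- iota 0 (size x.2)] | x <- zip lam ps].

Lemma kbs_mem (F : eqType) (lam : seq F) ps b : b \in kbs lam ps ->
  [/\ b.1.1 \in zip lam ps, b.2 = nth 0 b.1.1.2 b.1.2 & b.1.2 < size b.1.1.2].
Proof.
move/flattenP => [s /mapP [x hx ->] /mapP [k]]; rewrite mem_iota add0n => /andP [_ hi] -> /=.
by split.
Qed.

Lemma uniq_keys_kbs (F : eqType) (lam : seq F) ps : uniq lam -> uniq (map fst (kbs lam ps)).
Proof.
move=> /(zip_uniql ps); rewrite /kbs; elim: (zip lam ps) => //= x s IH /andP [hx hs].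
rewrite map_cat cat_uniq IH // andbT -map_comp map_inj_uniq ?iota_uniq /=; last by move=> ? ? [].
apply/hasPn => k /mapP [b /flattenP [s' /mapP [y hy ->] /mapP [i _ ->]] ->] /=.
apply/mapP => [[i' _ [e _]]]; by move: hx; rewrite -e hy.
Qed.

Lemma uniq_map_eq (S T : eqType) (f : S -> T) s x y : uniq (map f s) -> x \in s -> y \in s ->
  f x = f y -> x = y.
Proof.
elim: s => //= a s IH /andP [ha hs]; rewrite !inE => /orP [/eqP ->|hx] /orP [/eqP ->|hy] //.
- by move=> e; move: ha; rewrite e map_f.
- by move=> e; move: ha; rewrite -e map_f.
- exact: IH.
Qed.

Lemma mem_leq_sumn a s : a \in s -> a <= sumn s.
Proof. by elim: s => //= b s IH; rewrite inE => /orP [/eqP ->|/IH]; lia. Qed.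

Lemma nth_leq_sumn s i : nth 0 s i <= sumn s.
Proof. by case: (ltnP i (size s)) => h; [apply/mem_leq_sumn/mem_nth | rewrite nth_default]. Qed.

Lemma sum_take (p : seq nat) j : \sum_(i < j) nth 0 p i = sumn (take j p).
Proof.
elim: j p => [|j IH] [|a p] /=; rewrite ?big_ord0 // ?take0 //.
  by rewrite big1 // => i _; rewrite nth_nil.
by rewrite big_ord_recl /= IH.
Qed.

Lemma sum_iota_take (p : seq nat) j :
  \sum_(i <- iota 0 (size p)) (if i < j then nth 0 p i else 0) = sumn (take j p).
Proof.
elim: p j => [|a p IH] j /=; first by rewrite big_nil.
rewrite big_cons -add1n iotaDl big_map; case: j => [|j] /=.
  by rewrite big1 // => i _.
rewrite -IH; congr (_ + _); by apply: eq_bigr => i _; rewrite add1n ltnS.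
Qed.

Lemma sumn_kbs (F : Type) (lam : seq F) ps : size lam = size ps ->
  sumn (map snd (kbs lam ps)) = sumn (map sumn ps).
Proof.
elim: ps lam => [|p ps IH] [|c lam] //= [hs].
rewrite /kbs /= map_cat sumn_cat -/(kbs lam ps) IH // -map_comp /=.
by rewrite -/(mkseq _ _) mkseq_nth.
Qed.

End PartE0.
Import PartE0.

Module PartE.
Set Implicit Arguments. Unset Strict Implicit. Unset Printing Implicit Defensive.
Local Open Scope ring_scope.

Section Lower.
Variables (F : fieldType) (n' : nat).
Local Notation n := n'.+1.
Variables (lam : seq F) (ps : seq (seq nat)) (j : nat).
Hypotheses (hb : bundle_data n ps) (hl : size lam = size ps) (hu : uniq lam).

Local Notation kb := (kbs lam ps).
Definition phis (k : (F * seq nat) * nat) := k.1.1.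

Lemma bl_kbs : bl phis kb = flatten [seq [seq (x.1, m) | m <- x.2] | x <- zip lam ps].
Proof.
rewrite /bl /kbs map_flatten -map_comp; congr flatten; apply: eq_map => x /=.
by rewrite -map_comp; rewrite -{3}(mkseq_nth 0 x.2) /mkseq -map_comp.
Qed.

Lemma Hn : size (lab kb) = n.
Proof. by case/andP: hb => _ /eqP <-; rewrite size_lab sumn_kbs. Qed.

Local Notation J := (jordan_mx n (bl phis kb)).
Local Notation dl := (((0 : F, [::]), 0%N), 0%N, 0%N).
Local Notation lb p := (nth dl (lab kb) p).

Definition Vs : 'M[F]_(j, n) :=
  \matrix_(i < j) \sum_(p : 'I_n | ((lb p).1.1.2 == i) && ((lb p).1.2 == 0%N)) ev F n' p.

Definition Ts := [set p : 'I_n | ((lb p).1.1.2 < j)%N].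

Lemma lower_one (p : 'I_n) : p \in Ts ->
  exists i : 'I_j, exists G, row i Vs *m horner_mx J G = ev F n' p.
Proof.
rewrite inE; case hlp : (lb p) => [[[x i] t] m] /= hi.
have hpn : (p < size (lab kb))%N by rewrite Hn.
have := mem_nth dl hpn; rewrite hlp => /lab_mem [b hbk /= [hb1 [hb2 htm]]].
have [hx hm his] := kbs_mem hbk; rewrite -hb1 /= in hx hm his; rewrite hb2 {}hm in htm hlp *.
set m0 := nth 0 x.2 i in htm hlp *.
set c := x.1.
set q := \prod_(y <- zip lam ps | y.1 != c) ('X - y.1%:P) ^+ n.
have cop : coprimep (('X - c%:P) ^+ m0) q.
  apply: coprimep_expl; rewrite /q; apply big_ind; first exact: coprimep1.
    by move=> a1 a2 h1 h2; rewrite coprimepMr h1.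
  move=> y hy; apply: coprimep_expr; apply: coprimep_XsubC2; by rewrite subr_eq0.
have [U [W hUW]] : exists U W, U * ('X - c%:P) ^+ m0 + W * q = 1.
  case/Bezout_coprimepP: cop => [[u1 u2]] /= h.
  have /size_poly1P [k hk0 hk] : size (u1 * ('X - c%:P) ^+ m0 + u2 * q) == 1%N.
    by rewrite size_poly_eq1.
  exists (k^-1 *: u1), (k^-1 *: u2).
  by rewrite -!scalerAl -scalerDr hk -mul_polyC -polyCM mulVf.
exists (Ordinal hi), (('X - c%:P) ^+ t * (W * q)).
rewrite rowK mulmx_suml.
have [htp hp0] := lab_start hpn hlp.
have hp0n : (p - t < n)%N by have := ltn_ord p; lia.
rewrite (bigD1 (Ordinal hp0n)) /=; last by rewrite hp0 /= !eqxx.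
rewrite big1 ?addr0.
  have -> : ('X - c%:P) ^+ t * (W * q) =
      ('X - c%:P) ^+ t - ('X - c%:P) ^+ (m0 - 0) * (('X - c%:P) ^+ t * U).
    have hW : W * q = 1 - U * ('X - c%:P) ^+ m0 by rewrite -hUW; ring.
    by rewrite subn0 hW; ring.
  rewrite rmorphB /= mulmxBr (ev_kill_dvd Hn hp0n hp0 (dvdp_mulIl _ _)) subr0.
  rewrite rmorphXn /= hornerXC (ev_chain phis Hn hp0n hp0) ?add0n //.
  by rewrite subnK.
move=> p' /andP [/andP [/eqP hi' /eqP ht'] hne].
have hp'n : (p' < size (lab kb))%N by rewrite Hn.
case hlp' : (lb p') hi' ht' => [[[x' i'] t'] m'] /= hi' ht'; subst i' t'.
have := mem_nth dl hp'n; rewrite hlp' => /lab_mem [b' hbk' /= [hb1' [hb2' _]]].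
have [hx' hm' _] := kbs_mem hbk'; rewrite -hb1' /= in hx' hm'; rewrite hb2' {}hm' in hlp' *.
case: (eqVneq x'.1 c) => hc.
  have ex : x' = x.
    apply: (uniq_map_eq (f := fst)) hx' hx hc; change (uniq (unzip1 (zip lam ps))).
    by rewrite unzip1_zip ?hl.
  subst x'; exfalso; move/negP: hne; apply; apply/eqP/val_inj => /=.
  apply/eqP; rewrite -(nth_uniq dl hp'n) ?Hn ?(uniq_lab (uniq_keys_kbs ps hu)) //.
  by rewrite hlp' hp0.
apply: (ev_kill_dvd Hn (ltn_ord p') hlp').
have hmn : (nth 0 x'.2 i <= n)%N.
  apply: leq_trans (nth_leq_sumn _ _) _; case/andP: hb => _ /eqP <-.
  apply: mem_leq_sumn; apply: map_f.
  by have := map_f snd hx'; change (x'.2 \in unzip2 (zip lam ps) -> x'.2 \in ps); rewrite unzip2_zip ?hl.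
rewrite subn0; apply: dvdp_trans (dvdp_exp2l _ hmn) _.
apply: dvdp_trans (_ : q %| _); last first.
  by apply: dvdp_trans (dvdp_mulIr W q) (dvdp_mulIr _ _).
by rewrite /q (big_rem _ hx') /= hc dvdp_mulIl.
Qed.

End Lower.

End PartE.
Import PartE.

Module PartF0.
Set Implicit Arguments. Unset Strict Implicit. Unset Printing Implicit Defensive.

Lemma lab_cat (K : eqType) (s1 s2 : seq (K * nat)) : lab (s1 ++ s2) = lab s1 ++ lab s2.
Proof. by rewrite /lab map_cat flatten_cat. Qed.

Lemma count_kbs (F : eqType) (lam : seq F) ps j : size lam = size ps ->
  count (fun l : (F * seq nat * nat) * nat * nat => l.1.1.2 < j) (lab (kbs lam ps))
  = \sum_(i < j) deg_seq ps i.
Proof.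
elim: ps lam => [|p ps IH] [|c lam] //= => [_|[hs]].
  by rewrite big1 // => i _; rewrite /deg_seq big_nil.
rewrite /kbs /= lab_cat -/(kbs lam ps) count_cat IH //.
rewrite /deg_seq; under eq_bigr => i _ do rewrite big_cons.
rewrite big_split /=; congr (_ + _).
rewrite sum_take -sum_iota_take /lab -map_comp count_flatten -map_comp sumnE big_map.
apply: eq_bigr => i _ /=; rewrite count_map /=.
case: ifP => h.
  rewrite (eq_count (a2 := predT)) => [|t /=]; last by rewrite h.
  apply/eqP; rewrite -{2}(size_iota 0 (nth 0 p i)) -all_count; exact/allP.
rewrite (eq_count (a2 := pred0)) => [|t /=]; last by rewrite h.
by rewrite count_pred0.
Qed.

End PartF0.
Import PartF0.

Module PartG.
Set Implicit Arguments. Unset Strict Implicit. Unset Printing Implicit Defensive.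
Local Open Scope ring_scope.

Section Anal.
Variable C : numFieldType.

Definition sn m p (X : 'M[C]_(m, p)) : C := \sum_i \sum_j `|X i j|.

Lemma le_sum1 (I : finType) (F : I -> C) i0 : (forall i, 0 <= F i) -> F i0 <= \sum_i F i.
Proof. by move=> h; rewrite (bigD1 i0) //= ler_wpDr // sumr_ge0. Qed.

Lemma sn_ge0 m p (X : 'M[C]_(m, p)) : 0 <= sn X.
Proof. by apply: sumr_ge0 => i _; apply: sumr_ge0. Qed.

Lemma entry_le m p (X : 'M[C]_(m, p)) i j : `|X i j| <= sn X.
Proof.
have h1 := le_sum1 (F := fun j => `|X i j|) j (fun _ => normr_ge0 _).
have h2 := le_sum1 (F := fun i => \sum_j `|X i j|) i (fun _ => sumr_ge0 _ (fun _ _ => normr_ge0 _)).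
exact: le_trans h1 h2.
Qed.

Lemma sn_add m p (X Y : 'M[C]_(m, p)) : sn (X + Y) <= sn X + sn Y.
Proof.
rewrite /sn -big_split /=; apply: ler_sum => i _; rewrite -big_split /=.
by apply: ler_sum => j _; rewrite mxE ler_normD.
Qed.

Lemma sn_opp m p (X : 'M[C]_(m, p)) : sn (- X) = sn X.
Proof. by apply: eq_bigr => i _; apply: eq_bigr => j _; rewrite mxE normrN. Qed.

Lemma sn_mul m p q (X : 'M[C]_(m, p)) (Y : 'M[C]_(p, q)) : sn (X *m Y) <= sn X * sn Y.
Proof.
rewrite /sn mulr_suml; apply: ler_sum => i _.
apply: le_trans (_ : \sum_k \sum_l `|X i l| * `|Y l k| <= _).
  apply: ler_sum => k _; rewrite mxE; apply: le_trans (ler_norm_sum _ _ _) _.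
  by apply: ler_sum => l _; rewrite normrM.
rewrite exchange_big /= mulr_suml; apply: ler_sum => l _; rewrite -mulr_sumr.
apply: ler_wpM2l => //.
exact: (le_sum1 (F := fun l => \sum_k `|Y l k|) l (fun _ => sumr_ge0 _ (fun _ _ => normr_ge0 _))).
Qed.


Lemma sn0 m p : sn (0 : 'M[C]_(m, p)) = 0.
Proof. by rewrite /sn big1 // => i _; rewrite big1 // => j _; rewrite mxE normr0. Qed.

Lemma sn_B m p (A B : 'M[C]_(m, p)) : sn B <= sn A + sn (B - A).
Proof. by rewrite -{1}(subrK A B) addrC sn_add. Qed.

Lemma horner_lip n' (A : 'M[C]_n'.+1) (G : {poly C}) :
  exists2 K, 0 <= K & forall B, sn (B - A) <= 1 ->
    sn (horner_mx B G - horner_mx A G) <= K * sn (B - A).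
Proof.
elim/poly_ind: G => [|G c [K hK IH]].
  by exists 0 => // B _; rewrite !rmorph0 subrr sn0 mul0r.
exists (K * (sn A + 1) + sn (horner_mx A G)).
  by rewrite addr_ge0 ?sn_ge0 // mulr_ge0 // addr_ge0 ?sn_ge0.
move=> B hB; rewrite !rmorphD !rmorphM /= !horner_mx_X !horner_mx_C.
set hB' := horner_mx B G; set hA := horner_mx A G.
have -> : hB' * B + c%:M - (hA * A + c%:M) = (hB' - hA) *m B + hA *m (B - A).
  rewrite -!mulmxE mulmxBl mulmxBr addrA subrK opprD addrACA subrr addr0.
  by [].
apply: le_trans (sn_add _ _) _; rewrite mulrDl.
apply: lerD; last exact: sn_mul.
apply: le_trans (sn_mul _ _) _; rewrite mulrAC.
apply: ler_pM; [exact: sn_ge0 | exact: sn_ge0 | exact: IH |].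
by apply: le_trans (sn_B A B) _; rewrite lerD2l.
Qed.


Lemma max_exists (I : finType) (f : I -> C) (i0 : I) : (forall i, 0 <= f i) ->
  exists c, forall z, f z <= f c.
Proof.
move=> h0.
suff [c hc] : exists c, forall z, z \in enum I -> f z <= f c.
  by exists c => z; apply: hc; rewrite mem_enum.
elim: (enum I) => [|a s [c hc]]; first by exists i0.
have := real_leVge (ger0_real (h0 a)) (ger0_real (h0 c)); case/orP => h.
  by exists c => z; rewrite inE => /orP [/eqP ->|/hc].
exists a => z; rewrite inE => /orP [/eqP ->|/hc hz] //.
exact: le_trans hz h.
Qed.

Lemma dom_free S n (M : 'M[C]_(S, n)) (tau : 'I_S -> 'I_n) :
  (forall z c, S%:R * `|M z (tau c) - (z == c)%:R| < 1) -> row_free M.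
Proof.
move=> hM; rewrite -kermx_eq0; apply: contraT => /rowV0Pn [v /sub_kermxP hv v0].
have [z0 hz0] : exists z, v 0 z != 0.
  apply/existsP; apply: contraR v0 => /existsPn h; apply/eqP/matrixP => i z.
  by rewrite ord1 mxE; move/negbNE/eqP: (h z).
have [c hc] := max_exists (f := fun z => `|v 0 z|) z0 (fun _ => normr_ge0 _).
have vc0 : 0 < `|v 0 c| by apply: lt_le_trans (hc z0); rewrite normr_gt0.
have e : v 0 c = - \sum_z v 0 z * (M z (tau c) - (z == c)%:R).
  have := congr1 (fun X : 'M[C]_(1, n) => X 0 (tau c)) hv; rewrite !mxE => h0.
  apply/eqP; rewrite -subr_eq0 opprK; apply/eqP; rewrite -{2}h0.
  rewrite (bigD1 c) //= [X in _ = X](bigD1 c) //= eqxx addrA; congr (_ + _).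
    by rewrite mulrBr mulr1 addrC subrK.
  by apply: eq_bigr => z hz; rewrite (negbTE hz) subr0.
have h1 : `|v 0 c| <= \sum_z `|v 0 c| * `|M z (tau c) - (z == c)%:R|.
  rewrite {1}e normrN; apply: le_trans (ler_norm_sum _ _ _) _.
  by apply: ler_sum => z _; rewrite normrM ler_wpM2r.
have h2 : S%:R * `|v 0 c| < S%:R * `|v 0 c|.
  apply: le_lt_trans (_ : S%:R * `|v 0 c| <= S%:R * \sum_z `|v 0 c| * `|M z (tau c) - (z == c)%:R|) _.
    by rewrite ler_wpM2l.
  have -> : S%:R * `|v 0 c| = \sum_(z : 'I_S) `|v 0 c| by rewrite sumr_const card_ord mulr_natl.
  rewrite mulr_sumr.
  apply: ltr_sum; first by apply/hasP; exists c; rewrite ?mem_index_enum.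
  by move=> z _; rewrite mulrCA -[X in _ < X]mulr1 ltr_pM2l.
by rewrite ltxx in h2.
Qed.


Lemma robust n' S (A : 'M[C]_n'.+1) (Y : 'M[C]_n'.+1 -> 'M[C]_(S, n'.+1))
    (tau : 'I_S -> 'I_n'.+1) K :
  (forall z c, Y A z (tau c) = (z == c)%:R) -> 0 <= K ->
  (forall B, sn (B - A) <= 1 -> forall z c, `|Y B z c - Y A z c| <= K * sn (B - A)) ->
  exists2 d, 0 < d & forall B : 'M[C]_n'.+1, (forall i j, `|A i j - B i j| < d) -> row_free (Y B).
Proof.
move=> hYA hK hY.
set T := S%:R * K + 1.
have hT : 0 < T by rewrite ltr_wpDl ?mulr_ge0 ?ler0n.
set N : C := (n'.+1 * n'.+1)%:R.
have hN : 0 < N by rewrite ltr0n.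
exists (N * T)^-1; first by rewrite invr_gt0 mulr_gt0.
move=> B hB; set w := sn (B - A).
have hw0 : 0 <= w := sn_ge0 _.
have hw : w < T^-1.
  have -> : T^-1 = \sum_(i : 'I_n'.+1) \sum_(j : 'I_n'.+1) (N * T)^-1.
    rewrite sumr_const sumr_const card_ord -mulrnA -mulr_natl invfM mulrA.
    by rewrite -/N mulfV ?mul1r // gt_eqF.
  apply: ltr_sum; first by apply/hasP; exists ord0; rewrite ?mem_index_enum.
  move=> i _; apply: ltr_sum; first by apply/hasP; exists ord0; rewrite ?mem_index_enum.
  by move=> j _; rewrite !mxE distrC hB.
have hTw : T * w < 1 by rewrite -ltr_pdivlMl // mulr1.
have hSKw : S%:R * K * w <= T * w by rewrite ler_wpM2r // lerDl.
have hw1 : w <= 1.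
  apply: le_trans (ltW hTw); rewrite -{1}(mul1r w) ler_wpM2r // lerDr mulr_ge0 ?ler0n //.
apply: (dom_free (tau := tau)) => z c; rewrite -hYA.
apply: le_lt_trans hTw; apply: le_trans hSKw; rewrite -mulrA ler_wpM2l ?ler0n //.
exact: hY.
Qed.

End Anal.

End PartG.
Import PartG.

Unset Implicit Arguments. Set Strict Implicit. Set Printing Implicit Defensive.


Lemma bundle0 ps : bundle_data 0 ps -> ps = [::].
Proof.
case: ps => [|p ps] // /andP [/= /andP [hp _]] /eqP.
case/and3P: hp; case: p => [|a p] //= _ /andP [ha _] _; lia.
Qed.

Theorem lemma4 (R : realType) (n : nat) (ps pt : seq (seq nat)) :
  bundle_data n ps -> bundle_data n pt ->
  (forall A : 'M[R[i]]_n, in_bundle ps A -> in_closure (in_bundle pt) A) ->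
  (size pt <= size ps)%N ->
  forall j : nat,
    (\sum_(i < j) deg_seq ps i <= \sum_(i < j) deg_seq pt i)%N.
Proof.
move=> hbs hbt hcl _ j.
case: n hbs hbt hcl => [|n'] hbs hbt hcl.
  rewrite (bundle0 _ hbs) big1 // => i _; by rewrite /deg_seq big_nil.
set lam := [seq (a%:R : R[i])%R | a <- iota 0 (size ps)].
have hl : size lam = size ps by rewrite size_map size_iota.
have hu : uniq lam.
  rewrite map_inj_uniq ?iota_uniq // => a b /eqP; rewrite eqr_nat => /eqP.
  done.
set A := jordan_mx n'.+1 (flatten [seq [seq (x.1, m) | m <- x.2] | x <- zip lam ps]).
have hA : in_bundle ps A.
  exists lam; split=> //; exists (1%:M)%R; split; first exact: unitmx1.
  by rewrite invmx1 mul1mx mulmx1.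
have eA : A = jordan_mx n'.+1 (bl (@phis _) (kbs lam ps)) by rewrite bl_kbs.
set T := Ts n' lam ps j.
set S := #|T|.
have hS : S = (\sum_(i < j) deg_seq ps i)%N.
  rewrite -(count_kbs j hl) /S /T /Ts.
  apply: (card_nth _ (fun l : (R[i] * seq nat * nat) * nat * nat => (l.1.1.2 < j)%N)).
  exact: Hn hbs hl.
set V := Vs n' lam ps j.
have hex : forall z : 'I_S, exists i : 'I_j, exists G,
    (row i V *m horner_mx A G = ev _ n' (enum_val z))%R.
  move=> z; rewrite eA; apply: (lower_one hbs hl hu); exact: enum_valP.
have [ifun hi] := fin_all_exists hex.
have [Gfun hG] := fin_all_exists hi.
set Y := fun B : 'M[R[i]]_n'.+1 => (\matrix_(z < S) (row (ifun z) V *m horner_mx B (Gfun z)))%R.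
have hYA : forall z c, Y A z (enum_val c) = ((z == c)%:R)%R.
  move=> z c; rewrite /Y mxE hG mxE (inj_eq val_inj) (inj_eq enum_val_inj) eq_sym.
  by [].
have hK : forall z, exists2 K, (0 <= K)%R & forall B, (sn (B - A) <= 1 ->
    sn (horner_mx B (Gfun z) - horner_mx A (Gfun z)) <= K * sn (B - A))%R.
  by move=> z; apply: horner_lip.
have [Kf hKf0 hKf] := fin_all_exists2 hK.
set K := (\sum_z sn (row (ifun z) V) * Kf z)%R.
have hK0 : (0 <= K)%R by apply: sumr_ge0 => z _; rewrite mulr_ge0 ?sn_ge0.
have hY : forall B, (sn (B - A) <= 1)%R -> forall z c,
    (`|Y B z c - Y A z c| <= K * sn (B - A))%R.
  move=> B hB z c.
  have -> : (Y B z c - Y A z c =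
      (row (ifun z) V *m (horner_mx B (Gfun z) - horner_mx A (Gfun z))) 0 c)%R.
    by rewrite mulmxBr !mxE.
  apply: le_trans (entry_le _ _ _) _; apply: le_trans (sn_mul _ _) _.
  apply: le_trans (ler_wpM2l (sn_ge0 _) (hKf z B hB)) _.
  rewrite mulrA; apply: ler_wpM2r; first exact: sn_ge0.
  apply: (le_sum1 (F := fun z => sn (row (ifun z) V) * Kf z)%R).
  by move=> z'; rewrite mulr_ge0 ?sn_ge0.
have [d hd0 hd] := robust hYA hK0 hY.
move: d hd0 hd => [a b]; rewrite ltcE /= => /andP [/eqP hb ha] hd; subst b.
have [B [hB hnear]] := hcl A hA a ha.
have hYB := hd B hnear.
case: hB => lamt [hlt hut [P [hP eB]]].
set N := (\max_(z < S) size (Gfun z))%N.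
have hsub : (Y B <= Kry N B V)%MS.
  apply/row_subP => z; rewrite rowK.
  apply: submx_trans (submxMr _ (row_sub _ _)) _.
  apply: low_sub; exact: (leq_bigmax (F := fun z => size (Gfun z))).
have := mxrankS hsub; rewrite (eqP hYB) -hS => h1.
apply: leq_trans h1 _; rewrite eB; exact: upper.
Qed.
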